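(* Under the standing assumptions, let $\vec v$ be a demand vector with at least four non-zero entries, and let $t$ be a task of type 2 with respect to $\vec v$ with intermediate task $i$. Then task $i$ is of type 1 with respect to $\vec v$.
   Context: Standing assumptions: $n\ge 4$, $k\ge 5$, and $f_1,\dots,f_n$ are functions from demand vectors to $[k]$ satisfying the demand (for every demand vector $\vec v$ and task $j$, exactly $v_j$ agents $a$ have $f_a(\vec v)=j$), with maximum switching cost at most $2$. A demand vector is $\vec v=(v_1,\dots,v_k)$ of non-negative integers with $\sum v_j=n$; task $j$ is non-empty in $\vec v$ if $v_j\ge1$. The switching cost of $(\vec v,\vec v')$ is the number of agents $a$ with $f_a(\vec v)\ne f_a(\vec v')$; $\vec v,\vec v'$ are adjacent if $\|\vec v-\vec v'\|_1=2$. An ordered pair $(\vec v_1,\vec v_2)$ is $(s,t)$-adjacent if $s\ne t$ and $\vec v_2$ is obtained from $\vec v_1$ by moving one unit of demand from task $s$ to task $t$. Agent $a$ is $(i,j)$-mobile with respect to $(\vec v_1,\vec v_2)$ if $f_a(\vec v_1)=i$, $f_a(\vec v_2)=j$, $i\ne j$. If $(\vec v_1,\vec v_2)$ is $(s,t)$-adjacent with switching cost $2$, then there is a task $i\notin\{s,t\}$ such that one switching agent is $(s,i)$-mobile and the other is $(i,t)$-mobile; $i$ is called the intermediate task of $(\vec v_1,\vec v_2)$. A task $t$ is of type 1 with respect to $\vec v$ if for every task $s\ne t$ non-empty in $\vec v$, the $(s,t)$-adjacent pair starting at $\vec v$ has switching cost $1$. A task $t$ is of type 2 with respect to $\vec v$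 if there exist a task $i$ and an agent $a$ such that for every task $s\notin\{i,t\}$ non-empty in $\vec v$, the $(s,t)$-adjacent pair starting at $\vec v$ has switching cost $2$, intermediate task $i$, and $(i,t)$-mobile agent $a$; then $i$ is the intermediate task of $t$ with respect to $\vec v$. *)

(* Defs.v *)
From mathcomp Require Import all_boot.
Set Implicit Arguments. Unset Strict Implicit. Unset Printing Implicit Defensive.

(* Tasks are 'I_k, agents are 'I_n, demand vectors are {ffun 'I_k -> nat}. *)
Definition dvec (k : nat) := {ffun 'I_k -> nat}.

Definition is_demand (n k : nat) (v : dvec k) : Prop := \sum_(j < k) v j = n.

(* an assignment: f a v is the task of agent a in demand vector v *)
Definition assignment (n k : nat) := 'I_n -> dvec k -> 'I_k.

Definition satisfies_demand n k (f : assignment n k) : Prop :=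
  forall v : dvec k, is_demand n v ->
    forall j : 'I_k, #|[set a : 'I_n | f a v == j]| = v j.

Definition switching_cost n k (f : assignment n k) (v v' : dvec k) : nat :=
  #|[set a : 'I_n | f a v != f a v']|.

Definition adjacent k (v v' : dvec k) : Prop :=
  \sum_(j < k) ((v j - v' j) + (v' j - v j)) = 2.

Definition max_cost_le2 n k (f : assignment n k) : Prop :=
  forall v v' : dvec k, is_demand n v -> is_demand n v' -> adjacent v v' ->
    switching_cost f v v' <= 2.

Definition move k (v : dvec k) (s t : 'I_k) : dvec k :=
  [ffun j => if j == s then (v j).-1 else if j == t then (v j).+1 else v j].

Definition nonempty k (v : dvec k) (j : 'I_k) : bool := 0 < v j.

Definition mobile n k (f : assignment n k) (a : 'I_n) (v1 v2 : dvec k) (i j : 'I_k) : Prop :=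
  f a v1 = i /\ f a v2 = j /\ i <> j.

Definition intermediate n k (f : assignment n k) (v1 v2 : dvec k) (s t i : 'I_k) : Prop :=
  i <> s /\ i <> t /\
  exists a b : 'I_n, mobile f a v1 v2 s i /\ mobile f b v1 v2 i t.

Definition type1 n k (f : assignment n k) (v : dvec k) (t : 'I_k) : Prop :=
  forall s : 'I_k, s <> t -> nonempty v s -> switching_cost f v (move v s t) = 1.

Definition type2_with n k (f : assignment n k) (v : dvec k) (t i : 'I_k) (a : 'I_n) : Prop :=
  forall s : 'I_k, s <> i -> s <> t -> nonempty v s ->
    [/\ switching_cost f v (move v s t) = 2,
        intermediate f v (move v s t) s t i &
        mobile f a v (move v s t) i t].

Definition type2 n k (f : assignment n k) (v : dvec k) (t : 'I_k) : Prop :=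
  exists (i : 'I_k) (a : 'I_n), type2_with f v t i a.

(* Main.v *)
Require Import Defs.
From mathcomp Require Import all_boot zify.

Section S.
Variables (n k : nat) (f : assignment n k).

Lemma move_demand (v : dvec k) s t : is_demand n v -> s != t -> 0 < v s ->
  is_demand n (move v s t).
Proof.
rewrite /is_demand => Hv st vs.
rewrite (bigD1 s) //= (bigD1 t) 1?eq_sym //= !ffunE eqxx (eq_sym t s) (negbTE st) eqxx.
rewrite (eq_bigr (fun j => v j)); last first.
  by move=> j /andP [js jt]; rewrite ffunE (negbTE js) (negbTE jt).
move: Hv; rewrite (bigD1 s) //= (bigD1 t) 1?eq_sym //=.
lia.
Qed.

Lemma adj2 (u u' : dvec k) p q : p != q -> u p = (u' p).+1 -> u' q = (u q).+1 ->
  (forall j, j != p -> j != q -> u j = u' j) -> adjacent u u'.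
Proof.
rewrite /adjacent => pq Hp Hq Ho.
rewrite (bigD1 p) //= (bigD1 q) 1?eq_sym //= big1; last first.
  by move=> j /andP [jp jq]; rewrite Ho // subnn.
lia.
Qed.

End S.

Ltac brute := repeat (match goal with
  | |- context [?a == ?a] => rewrite eqxx
  | |- context [?a == ?b] => case: (eqVneq a b) => [?|?]; [subst|]
  end).

Lemma combi2 (T : eqType) (s t xa xb za zb : T) : s != t -> xa != xb -> za != zb ->
  (forall j, (xa==j) + (za==j) + (j==t) = (xb==j) + (zb==j) + (j==s)) ->
  (xa = s /\ zb = t /\ xb = za) \/ (za = s /\ xb = t /\ zb = xa).
Proof.
move=> st xab zab E.
move: (E s) (E t) (E xb) (E zb) (E za) (E xa) st xab zab; clear E.
brute; by [|left|right].
Qed.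

Lemma combi1 (T : eqType) (s t za zb : T) : s != t ->
  (forall j, (za==j) + (j==t) = (zb==j) + (j==s)) -> za = s /\ zb = t.
Proof.
move=> st E.
move: (E s) (E t) st; clear E.
brute; by [].
Qed.

Lemma cardI2 (T:finType) (P: pred T) x y : x != y -> #|[set a | P a] :&: [set x; y]| = P x + P y.
Proof.
move=> xy; case Px: (P x); case Py: (P y);
[ rewrite (_ : _ :&: _ = [set x; y]) ?cards2 ?xy //
| rewrite (_ : _ :&: _ = [set x]) ?cards1 //
| rewrite (_ : _ :&: _ = [set y]) ?cards1 //
| rewrite (_ : _ :&: _ = set0) ?cards0 // ];
apply/setP=> a; rewrite !inE; (case: (eqVneq a x) => [?|?]); (case: (eqVneq a y) => [?|?]); subst; rewrite ?Px ?Py ?eqxx ?andbF ?andbT //=; rewrite ?(negbTE xy) ?andbF ?andbT //=.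
all: try (move: xy; rewrite eqxx //).
Qed.

Lemma cardI1 (T:finType) (P: pred T) x : #|[set a | P a] :&: [set x]| = P x.
Proof.
case Px: (P x);
[ rewrite (_ : _ :&: _ = [set x]) ?cards1 //
| rewrite (_ : _ :&: _ = set0) ?cards0 // ];
apply/setP=> a; rewrite !inE; (case: (eqVneq a x) => [?|?]); subst; rewrite ?Px ?andbF ?andbT //=.
Qed.

Lemma three_le (T:finType) (A : {set T}) x y z : x \in A -> y \in A -> z \in A ->
  x != y -> x != z -> y != z -> 3 <= #|A|.
Proof.
move=> xA yA zA xy xz yz.
have <- : #|x |: [set y; z]| = 3 by rewrite cardsU1 cards2 yz !inE negb_or xy xz.
apply: subset_leq_card; apply/subsetP => a; rewrite !inE => /or3P [] /eqP ->; done.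
Qed.

Section T.
Variables (n k : nat) (f : assignment n k).
Definition Dset (v w : dvec k) := [set a | f a v != f a w].

Lemma count_eq (v w : dvec k) : satisfies_demand f -> is_demand n v -> is_demand n w ->
  forall j, #|[set a | f a v == j] :&: Dset v w| + w j = #|[set a | f a w == j] :&: Dset v w| + v j.
Proof.
move=> Hf Hv Hw j.
rewrite -{1}(Hf w Hw j) -(Hf v Hv j) -(cardsID (Dset v w) [set a | f a w == j]) -(cardsID (Dset v w) [set a|f a v == j]).
have -> : [set a | f a v == j] :\: Dset v w = [set a | f a w == j] :\: Dset v w.
  apply/setP => a; rewrite !inE negbK.
  by case: (eqVneq (f a v) (f a w)) => [->|].
lia.
Qed.

Lemma wexp (v : dvec k) s t : s != t -> 0 < v s ->
  forall j, move v s t j + (j == s) = v j + (j == t).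
Proof.
move=> st vs j; rewrite ffunE.
case: (eqVneq j s) => [->|js]; first by rewrite (negbTE st); lia.
case: (eqVneq j t) => [->|jt] /=; lia.
Qed.

Lemma Eq_gen (v : dvec k) s t : satisfies_demand f -> is_demand n v -> s != t -> 0 < v s ->
  forall j, #|[set a | f a v == j] :&: Dset v (move v s t)| + (j == t) =
            #|[set a | f a (move v s t) == j] :&: Dset v (move v s t)| + (j == s).
Proof.
move=> Hf Hv st vs j.
have := @count_eq v (move v s t) Hf Hv (@move_demand n k _ _ _ Hv st vs) j.
have := @wexp v s t st vs j.
move: (j == s) (j == t) => b1 b2; lia.
Qed.

Lemma cost_pos (v : dvec k) s t : satisfies_demand f -> is_demand n v -> s != t -> 0 < v s ->
  switching_cost f v (move v s t) != 0.
Proof.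
move=> Hf Hv st vs; apply/negP => /eqP/cards0_eq H0.
have := @Eq_gen v s t Hf Hv st vs s.
rewrite /Dset H0 !setI0 cards0 eqxx. by case: eqP => // e; rewrite e eqxx in st.
Qed.

Lemma cost1 (v : dvec k) s t : satisfies_demand f -> is_demand n v -> s != t -> 0 < v s ->
  switching_cost f v (move v s t) = 1 ->
  exists z, Dset v (move v s t) = [set z] /\ f z v = s /\ f z (move v s t) = t.
Proof.
move=> Hf Hv st vs /eqP/cards1P [z Hz].
exists z; split=> //.
apply: (@combi1 (ordinal k) s t (f z v) (f z (move v s t)) st) => j.
have := @Eq_gen v s t Hf Hv st vs j.
by rewrite /Dset Hz !cardI1.
Qed.

Lemma cost2 (v : dvec k) s t : satisfies_demand f -> is_demand n v -> s != t -> 0 < v s ->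
  switching_cost f v (move v s t) = 2 ->
  exists x y, x != y /\ Dset v (move v s t) = [set x; y] /\ f x v = s /\
     f y (move v s t) = t /\ f x (move v s t) = f y v.
Proof.
move=> Hf Hv st vs /eqP/cards2P [x [y [xy Hxy]]].
have xD : x \in Dset v (move v s t) by rewrite /Dset Hxy !inE eqxx.
have yD : y \in Dset v (move v s t) by rewrite /Dset Hxy !inE eqxx orbT.
rewrite inE in xD; rewrite inE in yD.
have E : forall j, (f x v == j) + (f y v == j) + (j == t) =
   (f x (move v s t) == j) + (f y (move v s t) == j) + (j == s).
  move=> j; have := @Eq_gen v s t Hf Hv st vs j.
  by rewrite /Dset Hxy !cardI2.
case: (@combi2 (ordinal k) _ _ _ _ _ _ st xD yD E) => [[h1 [h2 h3]]|[h1 [h2 h3]]].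
- by exists x, y.
- exists y, x; split; first by rewrite eq_sym.
  split; last by [].
  by rewrite /Dset Hxy setUC.
Qed.

End T.

Lemma out2 (T:finType) (A : {set T}) x y b : #|A| <= 2 -> x \in A -> y \in A -> x != y ->
  b != x -> b != y -> b \notin A.
Proof.
move=> H xA yA xy bx bY; apply/negP => bA.
have := @three_le _ _ _ _ _ xA yA bA xy; rewrite !(eq_sym _ b) bx bY => /(_ isT isT) h.
by move: H h; case: #|A| => [|[|[|]]].
Qed.

Lemma neqf (T U:eqType) (g : U -> T) a b : g a != g b -> a != b.
Proof. by apply: contraNneq => ->. Qed.

Lemma pick4 (T:finType) (A : {set T}) : 4 <= #|A| -> forall p q r : T,
  exists2 s, s \in A & [/\ s != p, s != q & s != r].
Proof.
move=> H p q r.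
case: (pickP [pred s in A | [&& s != p, s != q & s != r]]) => [s /andP [sA /and3P [h1 h2 h3]]|none].
  by exists s.
have : A \subset p |: [set q; r].
  apply/subsetP => s sA; have := none s; rewrite /= sA !inE /=.
  by case: (s == p); case: (s == q); case: (s == r).
move/subset_leq_card; rewrite cardsU1 cards2.
by move: H; case: (p \notin _); case: (q != r); case: #|A| => [|[|[|[|]]]].
Qed.

Section M.
Variables (n k : nat) (f : assignment n k).

Lemma adj_move (v : dvec k) (s t : 'I_k) : s != t -> 0 < v s -> adjacent v (move v s t).
Proof.
move=> st vs; apply: (@adj2 k v (move v s t) s t) => //.
- by rewrite ffunE eqxx prednK.
- by rewrite ffunE (eq_sym t s) (negbTE st) eqxx.
- by move=> j js jt; rewrite ffunE (negbTE js) (negbTE jt).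
Qed.

Ltac ifs := rewrite ?ffunE; repeat (case: eqP => [?|?]); subst; try congruence.

Lemma adj_ss (v : dvec k) (s t i : 'I_k) : s != t -> s != i -> t != i ->
  adjacent (move v s t) (move v s i).
Proof.
move=> st si ti; apply: (@adj2 k _ _ t i) => //; try move=> j /eqP jt /eqP ji; move/eqP: st; move/eqP: si; move/eqP: ti => ti si st; ifs.
Qed.

Lemma adj_ti (v : dvec k) (s t i : 'I_k) : s != t -> s != i -> t != i -> 0 < v s -> 0 < v t ->
  adjacent (move v s i) (move v t i).
Proof.
move=> st si ti vs vt; apply: (@adj2 k _ _ t s) => //; first (by rewrite eq_sym); try move=> j /eqP jt /eqP js; move/eqP: st; move/eqP: si; move/eqP: ti => ti si st; ifs; rewrite ?prednK //.
Qed.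

Local Notation Dset := (@Dset n k f).
Local Notation cost_pos := (@cost_pos n k f).
Local Notation cost2 := (@cost2 n k f).

Lemma cost_le2 (v w : dvec k) : max_cost_le2 f -> is_demand n v -> is_demand n w -> adjacent v w ->
  #|Dset v w| <= 2.
Proof. by move=> Hm Hv Hw A; apply: Hm. Qed.

Lemma notin_same (v w : dvec k) b : b \notin Dset v w -> f b w = f b v.
Proof. by rewrite inE negbK => /eqP ->. Qed.

Lemma case1 (v : dvec k) (t i : 'I_k) (a : 'I_n) :
  satisfies_demand f -> max_cost_le2 f -> is_demand n v -> type2_with f v t i a ->
  forall s : 'I_k, s <> i -> s <> t -> 0 < v s -> switching_cost f v (move v s i) = 1.
Proof.
move=> Hf Hm Hv H s si st vs.
have [c1 [_ [it [x [_ [[xv [xw _]] _]]]]] [av [aw _]]] := H s si st vs.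
have si' : s != i by apply/eqP.
have st' : s != t by apply/eqP.
have ti' : t != i by apply/eqP => e; apply: it; rewrite e.
set w1 := move v s t; set w2 := move v s i.
have d1 : is_demand n w1 by apply: move_demand.
have d2 : is_demand n w2 by apply: move_demand.
have c2le : #|Dset v w2| <= 2 by apply: cost_le2 => //; apply: adj_move.
have c2pos := cost_pos _ _ _ Hf Hv si' vs.
rewrite -/w2 in c2pos.
have [//|c2] : switching_cost f v w2 = 1 \/ switching_cost f v w2 = 2.
  by move: c2le c2pos; rewrite /switching_cost -/(Dset v w2); case: #|Dset v w2| => [|[|[|]]]; auto.
exfalso.
have [xx [yy [xy [D2 [xxv [yyw xxw]]]]]] := cost2 _ _ _ Hf Hv si' vs c2.
rewrite -/w2 in D2 yyw xxw.
have xD1 : x \in Dset v w1 by rewrite inE xv xw.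
have aD1 : a \in Dset v w1 by rewrite inE av aw eq_sym.
have xa : x != a by apply: (@neqf _ _ (fun b => f b v)); rewrite /= xv av.
have c1le : #|Dset v w1| <= 2 by rewrite /switching_cost in c1; rewrite /Dset c1.
have yyD2 : yy \in Dset v w2 by rewrite D2 !inE eqxx orbT.
have xxD2 : xx \in Dset v w2 by rewrite D2 !inE eqxx.
have j2i : f yy v != i by move: yyD2; rewrite inE yyw.
have j2s : f yy v != s by move: xxD2; rewrite inE xxw xxv eq_sym.
have axx : a != xx by apply: (@neqf _ _ (fun b => f b v)); rewrite /= xxv av eq_sym.
have ayy : a != yy by apply: (@neqf _ _ (fun b => f b v)); rewrite /= av eq_sym.
have xyy : x != yy by apply: (@neqf _ _ (fun b => f b v)); rewrite /= xv eq_sym.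
have aw2 : f a w2 = i.
  by rewrite (@notin_same v w2 a) ?av // D2 !inE negb_or axx ayy.
have yyw1 : f yy w1 = f yy v.
  by rewrite (@notin_same v w1 yy) // (@out2 _ _ x a yy c1le xD1 aD1 xa) // eq_sym.
have xw2 : f x w2 != i.
  case: (eqVneq x xx) => [->|xxx]; first by rewrite xxw.
  by rewrite (@notin_same v w2 x) ?xv // D2 !inE negb_or xxx xyy.
have c12 : #|Dset w1 w2| <= 2.
  apply: cost_le2 => //; apply: adj_ss => //.
have m1 : a \in Dset w1 w2 by rewrite inE aw aw2.
have m2 : yy \in Dset w1 w2 by rewrite inE yyw1 yyw.
have m3 : x \in Dset w1 w2 by rewrite inE xw eq_sym.
have := @three_le _ (Dset w1 w2) a yy x m1 m2 m3 ayy _ _.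
rewrite eq_sym xa eq_sym xyy => /(_ isT isT).
by move: c12; case: #|_| => [|[|[|]]].
Qed.


Lemma case2 (v : dvec k) (t i : 'I_k) (a : 'I_n) :
  satisfies_demand f -> max_cost_le2 f -> is_demand n v ->
  4 <= #|[set j : 'I_k | nonempty v j]| -> type2_with f v t i a ->
  t <> i -> 0 < v t -> switching_cost f v (move v t i) = 1.
Proof.
move=> Hf Hm Hv H4 H ti vt.
have ti' : t != i by apply/eqP.
set w := move v t i.
have d : is_demand n w by apply: move_demand.
have cle : #|Dset v w| <= 2 by apply: cost_le2 => //; apply: adj_move.
have cpos := cost_pos _ _ _ Hf Hv ti' vt.
rewrite -/w in cpos.
have [//|c2] : switching_cost f v w = 1 \/ switching_cost f v w = 2.
  by move: cle cpos; rewrite /switching_cost; case: #|_| => [|[|[|]]]; auto.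
exfalso.
have [xx [yy [xy [D2 [xxv [yyw xxw]]]]]] := cost2 _ _ _ Hf Hv ti' vt c2.
rewrite -/w in D2 yyw xxw.
have yyD2 : yy \in Dset v w by rewrite D2 !inE eqxx orbT.
have xxD2 : xx \in Dset v w by rewrite D2 !inE eqxx.
have ji : f yy v != i by move: yyD2; rewrite inE yyw.
have jt : f yy v != t by move: xxD2; rewrite inE xxw xxv eq_sym.
have [s sN [si st sj]] := @pick4 _ _ H4 i t (f yy v).
have vs : 0 < v s by move: sN; rewrite inE.
have si' : s <> i by apply/eqP.
have st' : s <> t by apply/eqP.
set w3 := move v s i.
have d3 : is_demand n w3 by apply: move_demand.
have c3 := @case1 v t i a Hf Hm Hv H s si' st' vs.
have [z [D3 [zv zw]]] := @cost1 n k f v s i Hf Hv si vs c3.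
rewrite -/w3 in D3 zw.
have zxx : z != xx by apply: (@neqf _ _ (fun b => f b v)); rewrite /= zv xxv.
have zyy : z != yy by apply: (@neqf _ _ (fun b => f b v)); rewrite /= zv.
have zw' : f z w = s by rewrite (@notin_same v w z) ?zv // D2 !inE negb_or zxx zyy.
have xxw3 : f xx w3 = t by rewrite (@notin_same v w3 xx) ?xxv // D3 inE eq_sym zxx.
have yyw3 : f yy w3 = f yy v by rewrite (@notin_same v w3 yy) // D3 inE eq_sym zyy.
have c12 : #|Dset w3 w| <= 2.
  apply: cost_le2 => //; apply: adj_ti => //; by rewrite eq_sym.
have m1 : z \in Dset w3 w by rewrite inE zw zw' eq_sym.
have m2 : xx \in Dset w3 w by rewrite inE xxw3 xxw eq_sym.
have m3 : yy \in Dset w3 w by rewrite inE yyw3 yyw.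
have := @three_le _ (Dset w3 w) z xx yy m1 m2 m3 zxx zyy xy.
by move: c12; case: #|_| => [|[|[|]]].
Qed.

End M.

Theorem lemma4p4 (n k : nat) (f : assignment n k) :
  4 <= n -> 5 <= k ->
  satisfies_demand f -> max_cost_le2 f ->
  forall (v : dvec k), is_demand n v ->
  4 <= #|[set j : 'I_k | nonempty v j]| ->
  forall (t i : 'I_k) (a : 'I_n), type2_with f v t i a ->
  type1 f v i.
Proof.
move=> _ _ Hf Hm v Hv H4 t i a H s si vs.
case: (eqVneq s t) => [e|st].
- subst s; exact: (@case2 n k f v t i a Hf Hm Hv H4 H si vs).
- apply: (@case1 n k f v t i a Hf Hm Hv H s si _ vs).
  by apply/eqP.
Qed.
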